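(* Let $\bar\beta=\mathcal{N}$. If $(B,\beta_1,\ldots,\beta_B)$ is a feasible solution of problem (RO-$\Sigma$), then $T^\sigma(\beta_1,\ldots,\beta_B,\bar\beta)\neq T^*(\beta_1,\ldots,\beta_B,\bar\beta)$ for every $\sigma\in\Sigma$.
   Context: A ballot style consists of contests $\mathcal{C}=\{1,\ldots,C\}$, candidates $\mathcal{N}=\{1,\ldots,N\}$ partitioned into nonempty sets $\mathcal{N}_c$ ($c\in\mathcal{C}$), and positive integers $v_c$. A filled-out ballot is a subset $\beta\subseteq\mathcal{N}$; $\mathscr{B}=\{\beta\subseteq\mathcal{N}: |\mathcal{N}_c\cap\beta|\le v_c\ \forall c\}$. For any deck of subsets and $i\in\mathcal{N}_c$: $T^*_i(\beta_1,\ldots,\beta_B)=\sum_{b=1}^B\mathbb{I}\{i\in\beta_b\text{ and }|\mathcal{N}_c\cap\beta_b|\le v_c\}$, and for a bijection $\sigma$ of $\mathcal{N}$, $T^\sigma_i(\beta_1,\ldots,\beta_B)=\sum_{b=1}^B\mathbb{I}\{\sigma(i)\in\beta_b\text{ and }|\{\sigma(j)\in\beta_b: j\in\mathcal{N}_c\}|\le v_c\}$. $\Sigma$ is the set of non-identity bijections $\mathcal{N}\to\mathcal{N}$. Problem (RO-$\Sigma$): minimize $B$ over $B\in\mathbb{N}$ and $\beta_1,\ldots,\beta_B\in\mathscr{B}$ subject to $T^\sigma(\beta_1,\ldots,\beta_B)\neq T^*(\beta_1,\ldots,\beta_B)$ for all $\sigma\in\Sigma$. *)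

(* Defs.v *)
From mathcomp Require Import all_boot all_order all_fingroup.
Set Implicit Arguments. Unset Strict Implicit. Unset Printing Implicit Defensive.

(* Candidates are 'I_N, contests are 'I_C; [con i] is the contest of candidate i,
   so N_c = [set i | con i == c]. Ballots are subsets {set 'I_N}; a deck is a
   sequence of ballots (B = size of the deck). *)

Section Ballots.
Variables (N C : nat) (con : 'I_N -> 'I_C) (v : 'I_C -> nat).

Definition contest (c : 'I_C) : {set 'I_N} := [set j | con j == c].

Definition valid_ballot (beta : {set 'I_N}) : bool :=
  [forall c, #|contest c :&: beta| <= v c].

Definition Tstar (deck : seq {set 'I_N}) : {ffun 'I_N -> nat} :=
  [ffun i => count (fun beta : {set 'I_N} =>
      (i \in beta) && (#|contest (con i) :&: beta| <= v (con i))) deck].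

Definition Tsig (sigma : {perm 'I_N}) (deck : seq {set 'I_N}) : {ffun 'I_N -> nat} :=
  [ffun i => count (fun beta : {set 'I_N} =>
      (sigma i \in beta) &&
      (#|[set sigma j | j in contest (con i)] :&: beta| <= v (con i))) deck].

Definition RO_feasible (deck : seq {set 'I_N}) : Prop :=
  all valid_ballot deck /\
  forall sigma : {perm 'I_N}, sigma != 1%g -> Tsig sigma deck <> Tstar deck.

End Ballots.

(* Main.v *)
Require Import Defs.
From mathcomp Require Import all_boot all_order all_fingroup.

Theorem proposition7 (N C : nat) (con : 'I_N -> 'I_C) (v : 'I_C -> nat)
  (con_surj : forall c : 'I_C, exists i : 'I_N, con i = c)
  (v_pos : forall c : 'I_C, 0 < v c)
  (deck : seq {set 'I_N}) :
  RO_feasible con v deck ->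
  forall sigma : {perm 'I_N}, sigma != 1%g ->
    Tsig con v sigma (rcons deck [set: 'I_N]) <> Tstar con v (rcons deck [set: 'I_N]).
Proof.
move=> [_ H] sigma Hs E; apply: (H sigma Hs).
apply/ffunP=> i; have := congr1 (fun f : {ffun _ -> nat} => f i) E.
rewrite !ffunE -!cats1 !count_cat /= !in_setT !setIT card_imset //; last exact: perm_inj.
by move/addIn.
Qed.
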